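(* Let $a,c\in[0,1]$ with $a\neq\frac12$, $c\neq\frac12$, and define $f_{a,c}:[0,1]\to[0,1]$ by $$f_{a,c}(x)=\begin{cases}(1-2a)x^2+2ax, & x\in[0,\frac13],\\ x, & x\in(\frac13,\frac23),\\ (1-2c)x^2+2cx, & x\in[\frac23,1].\end{cases}$$ Let $f^n$ denote the $n$-fold composition of $f=f_{a,c}$ with itself and $x^{(n)}=f^n(x^{(0)})$. Then: 1. The set of fixed points of $f_{a,c}$ is $(\frac13,\frac23)\cup\{0,1\}$. 2. If $0\le a<\frac12$ and $0\le c<\frac12$, then for every $x^{(0)}\in[\frac23,1)$ there exist $n\in\mathbb N$ and $p\in[\frac49(1+c),\frac23)$ such that $f^n(x^{(0)})=p$ and $f^{n+1}(x^{(0)})=f(p)=p$. 3. If $0\le a<\frac12$ (and $c\ne\frac12$ arbitrary), then $\lim_{n\to\infty}x^{(n)}=0$ for all $x^{(0)}\in[0,\frac13]$. 4. If $\frac12<c\le1$ (and $a\ne\frac12$ arbitrary), then $\lim_{n\to\infty}x^{(n)}=1$ for all $x^{(0)}\in[\frac23,1]$. 5. If $\frac12<a\le1$ and $0\le c<\frac12$, then for every $x^{(0)}\in(0,\frac13]$ (respectively $x^{(0)}\in[\frac23,1)$) there exist $n\in\mathbb N$ and $p\in(\frac13,\frac19(4a+1)]$ (respectively $p\in[\frac49(1+c),\frac23)$) such that $f^n(x^{(0)})=p$ and $f^{n+1}(x^{(0)})=f(p)=p$. 6. If $\frac12<a\le1$ and $\frac12<c\le1$, then for every $x^{(0)}\in(0,\frac13]$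 there exist $n\in\mathbb N$ and $p\in(\frac13,\frac19(4a+1)]$ such that $f^n(x^{(0)})=p$ and $f^{n+1}(x^{(0)})=f(p)=p$.
   Context: This map is the reduction to $[0,1]$ of the quadratic stochastic operator $x'=x^2+2p(x)xy$, $y'=2(1-p(x))xy+y^2$ (with $y=1-x$), where $p(x)=a$ for $x\le\frac13$, $b$ for $\frac13<x<\frac23$, $c$ for $x\ge\frac23$, in the case $b=\frac12$. *)

(* Defs.v *)
From Stdlib Require Import Reals.
Open Scope R_scope.

(* The reduced quadratic stochastic operator f_{a,c} on [0,1] (case b = 1/2). *)
Definition f_ac (a c x : R) : R :=
  if Rle_dec x (1/3) then (1 - 2*a) * x^2 + 2*a*x
  else if Rlt_dec x (2/3) then x
  else (1 - 2*c) * x^2 + 2*c*x.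

Definition f_iter (a c : R) (n : nat) (x : R) : R := Nat.iter n (f_ac a c) x.

(* Main.v *)
Require Import Defs.
From Stdlib Require Import Reals.
From Stdlib Require Import Lra Psatz.
Open Scope R_scope.

Lemma fL a c x : x <= 1/3 -> f_ac a c x = (1 - 2*a) * x^2 + 2*a*x.
Proof. intro H; unfold f_ac; destruct (Rle_dec x (1/3)); [reflexivity | lra]. Qed.

Lemma fM a c x : 1/3 < x < 2/3 -> f_ac a c x = x.
Proof. intro H; unfold f_ac; destruct (Rle_dec x (1/3)); [lra|].
  destruct (Rlt_dec x (2/3)); [reflexivity | lra]. Qed.

Lemma fR a c x : 2/3 <= x -> f_ac a c x = (1 - 2*c) * x^2 + 2*c*x.
Proof. intro H; unfold f_ac; destruct (Rle_dec x (1/3)); [lra|].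
  destruct (Rlt_dec x (2/3)); [lra | reflexivity]. Qed.

Lemma iter_S_r a c n x : f_iter a c (S n) x = f_iter a c n (f_ac a c x).
Proof.
  unfold f_iter; induction n; simpl; [reflexivity|].
  simpl in IHn; rewrite IHn; reflexivity.
Qed.

Lemma desc_R a c x0 : 0 <= c < 1/2 -> x0 < 1 ->
  forall N : nat, forall x, 2/3 <= x <= x0 ->
   x < 2/3 + INR N * ((1 - 2*c) * (2/3) * (1 - x0)) ->
   exists (n : nat) (p : R), 4/9 * (1 + c) <= p < 2/3 /\
         f_iter a c n x = p /\ f_iter a c (S n) x = f_ac a c p /\ f_ac a c p = p.
Proof.
  intros hc hx0 N; induction N as [|N IH]; intros x hx hlt.
  - simpl in hlt; lra.
  - rewrite S_INR in hlt.
    assert (E := fR a c x (proj1 hx)).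
    assert (h1 : x * (1 - x) >= (2/3) * (1 - x0)) by nra.
    assert (h2 : (1 - 2*c) * (x * (1 - x)) >= (1 - 2*c) * ((2/3) * (1 - x0))) by nra.
    assert (hdec : f_ac a c x <= x - (1 - 2*c) * (2/3) * (1 - x0)) by (rewrite E; nra).
    assert (hk : 0 <= (1 - 2*c) * (x + 2/3) + 2*c) by nra.
    assert (hm : 0 <= (x - 2/3) * ((1 - 2*c) * (x + 2/3) + 2*c)) by (apply Rmult_le_pos; lra).
    assert (hlow : f_ac a c x >= 4/9 * (1 + c)) by (rewrite E; nra).
    destruct (Rlt_dec (f_ac a c x) (2/3)) as [Hl|Hg].
    + exists 1%nat, (f_ac a c x).
      assert (Hp : f_ac a c (f_ac a c x) = f_ac a c x) by (apply fM; nra).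
      split; [lra|]. split; [reflexivity|]. split; [reflexivity|exact Hp].
    + assert (hd : 0 <= (1 - 2*c) * (2/3) * (1 - x0)) by (apply Rmult_le_pos; lra).
      set (d := (1 - 2*c) * (2/3) * (1 - x0)) in *.
      destruct (IH (f_ac a c x)) as [n [p [H1 [H2 [H3 H4]]]]]; [lra|lra|].
      exists (S n), p. rewrite !(iter_S_r a c _ x). auto.
Qed.

Lemma asc_L a c x0 : 1/2 < a <= 1 -> 0 < x0 ->
  forall N : nat, forall x, x0 <= x <= 1/3 ->
   1/3 < x + INR N * ((2*a - 1) * x0 * (2/3)) ->
   exists (n : nat) (p : R), 1/3 < p <= 1/9 * (4*a + 1) /\
         f_iter a c n x = p /\ f_iter a c (S n) x = f_ac a c p /\ f_ac a c p = p.
Proof.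
  intros ha hx0 N; induction N as [|N IH]; intros x hx hlt.
  - simpl in hlt; lra.
  - rewrite S_INR in hlt.
    assert (E := fL a c x (proj2 hx)).
    assert (h1 : x * (1 - x) >= x0 * (2/3)) by nra.
    assert (h2 : (2*a - 1) * (x * (1 - x)) >= (2*a - 1) * (x0 * (2/3))) by nra.
    assert (hinc : f_ac a c x >= x + (2*a - 1) * x0 * (2/3)) by (rewrite E; nra).
    assert (hk : 0 <= (1 - 2*a) * (1/3 + x) + 2*a) by nra.
    assert (hm : 0 <= (1/3 - x) * ((1 - 2*a) * (1/3 + x) + 2*a)) by (apply Rmult_le_pos; lra).
    assert (hup : f_ac a c x <= 1/9 * (4*a + 1)) by (rewrite E; nra).
    destruct (Rle_dec (f_ac a c x) (1/3)) as [Hl|Hg].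
    + assert (hd : 0 <= (2*a - 1) * x0 * (2/3)) by (apply Rmult_le_pos; [apply Rmult_le_pos|]; lra).
      set (d := (2*a - 1) * x0 * (2/3)) in *.
      destruct (IH (f_ac a c x)) as [n [p [H1 [H2 [H3 H4]]]]]; [lra|lra|].
      exists (S n), p. rewrite !(iter_S_r a c _ x). auto.
    + exists 1%nat, (f_ac a c x).
      assert (Hp : f_ac a c (f_ac a c x) = f_ac a c x) by (apply fM; nra).
      split; [lra|]. split; [reflexivity|]. split; [reflexivity|exact Hp].
Qed.

Lemma part2 a c : 0 <= c < 1/2 -> forall x0, 2/3 <= x0 < 1 ->
       exists (n : nat) (p : R), 4/9 * (1 + c) <= p < 2/3 /\
         f_iter a c n x0 = p /\ f_iter a c (S n) x0 = f_ac a c p /\ f_ac a c p = p.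
Proof.
  intros hc x0 hx0.
  set (d := (1 - 2*c) * (2/3) * (1 - x0)).
  assert (hd : 0 < d) by (unfold d; nra).
  destruct (archimed_cor1 d hd) as [N [HN HN0]].
  assert (HNpos : 0 < INR N) by (apply lt_0_INR; exact HN0).
  assert (HNd : INR N * d > 1).
  { apply (Rmult_lt_compat_l (INR N)) in HN; [|exact HNpos].
    rewrite Rinv_r in HN; lra. }
  apply (desc_R a c x0 hc (proj2 hx0) N); fold d; lra.
Qed.

Lemma part5a a c : 1/2 < a <= 1 -> forall x0, 0 < x0 <= 1/3 ->
       exists (n : nat) (p : R), 1/3 < p <= 1/9 * (4*a + 1) /\
         f_iter a c n x0 = p /\ f_iter a c (S n) x0 = f_ac a c p /\ f_ac a c p = p.
Proof.
  intros ha x0 hx0.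
  set (d := (2*a - 1) * x0 * (2/3)).
  assert (hd : 0 < d) by (unfold d; nra).
  destruct (archimed_cor1 d hd) as [N [HN HN0]].
  assert (HNpos : 0 < INR N) by (apply lt_0_INR; exact HN0).
  assert (HNd : INR N * d > 1).
  { apply (Rmult_lt_compat_l (INR N)) in HN; [|exact HNpos].
    rewrite Rinv_r in HN; lra. }
  apply (asc_L a c x0 ha (proj1 hx0) N); fold d; lra.
Qed.

Lemma part3 a c : 0 <= a < 1/2 ->
     forall x0, 0 <= x0 <= 1/3 -> Un_cv (fun n => f_iter a c n x0) 0.
Proof.
  intros ha x0 hx0.
  set (q := 1/3 + 4*a/3).
  assert (Hb : forall n, 0 <= f_iter a c n x0 <= 1/3 /\ f_iter a c n x0 <= q^n * x0).
  { induction n as [|n IH]; simpl; [lra|].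
    change (Nat.iter n (f_ac a c) x0) with (f_iter a c n x0).
    set (y := f_iter a c n x0) in *.
    rewrite (fL a c y) by lra.
    destruct IH as [[H1 H2] H3].
    assert (Hqn : 0 <= q^n) by (apply pow_le; unfold q; lra).
    assert (Ef : (1 - 2*a) * y^2 + 2*a*y = y * ((1 - 2*a) * y + 2*a)) by ring.
    rewrite Ef.
    assert (F1 : 0 <= (1 - 2*a) * y + 2*a <= q) by (unfold q; nra).
    assert (F2 : y * ((1 - 2*a) * y + 2*a) <= y * q) by (apply Rmult_le_compat_l; lra).
    assert (F3 : 0 <= y * ((1 - 2*a) * y + 2*a)) by (apply Rmult_le_pos; lra).
    assert (F4 : y * q <= q * (q^n * x0)) by (rewrite Rmult_comm; apply Rmult_le_compat_l; [unfold q; lra | exact H3]).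
    assert (F5 : y * q <= y * 1) by (apply Rmult_le_compat_l; unfold q; lra).
    rewrite <- Rmult_assoc in F4. lra. }
  intros eps heps.
  assert (Hq : Rabs q < 1) by (unfold q; rewrite Rabs_pos_eq; lra).
  destruct (pow_lt_1_zero q Hq eps heps) as [N HN].
  exists N; intros n hn. specialize (HN n hn).
  assert (Hqn : 0 <= q^n) by (apply pow_le; unfold q; lra).
  rewrite Rabs_pos_eq in HN by exact Hqn.
  unfold R_dist. destruct (Hb n) as [[H1 H2] H3].
  assert (H4 : q^n * x0 <= q^n) by (rewrite <- (Rmult_1_r (q^n)) at 2; apply Rmult_le_compat_l; lra).
  rewrite Rminus_0_r, Rabs_pos_eq by lra. nra.
Qed.

Lemma part4 a c : 1/2 < c <= 1 ->
     forall x0, 2/3 <= x0 <= 1 -> Un_cv (fun n => f_iter a c n x0) 1.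
Proof.
  intros hc x0 hx0.
  set (q := 5/3 - 4*c/3).
  assert (Hb : forall n, 2/3 <= f_iter a c n x0 <= 1 /\ 1 - f_iter a c n x0 <= q^n * (1 - x0)).
  { induction n as [|n IH]; simpl; [lra|].
    change (Nat.iter n (f_ac a c) x0) with (f_iter a c n x0).
    set (y := f_iter a c n x0) in *.
    rewrite (fR a c y) by lra.
    destruct IH as [[H1 H2] H3].
    assert (Hqn : 0 <= q^n) by (apply pow_le; unfold q; lra).
    assert (Ef : 1 - ((1 - 2*c) * y^2 + 2*c*y) = (1 - y) * (1 - (2*c - 1) * y)) by ring.
    assert (F1 : 0 <= 1 - (2*c - 1) * y <= q) by (unfold q; nra).
    assert (F2 : (1 - y) * (1 - (2*c - 1) * y) <= (1 - y) * q) by (apply Rmult_le_compat_l; lra).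
    assert (F3 : 0 <= (1 - y) * (1 - (2*c - 1) * y)) by (apply Rmult_le_pos; lra).
    assert (F4 : (1 - y) * q <= q * (q^n * (1 - x0))) by (rewrite Rmult_comm; apply Rmult_le_compat_l; [unfold q; lra | exact H3]).
    assert (F5 : 0 <= (1 - 2*c) * y^2 + 2*c*y - y).
    { replace ((1 - 2*c) * y^2 + 2*c*y - y) with ((2*c - 1) * (y * (1 - y))) by ring.
      apply Rmult_le_pos; [lra | apply Rmult_le_pos; lra]. }
    rewrite <- Rmult_assoc in F4. lra. }
  intros eps heps.
  assert (Hq : Rabs q < 1) by (unfold q; rewrite Rabs_pos_eq; lra).
  destruct (pow_lt_1_zero q Hq eps heps) as [N HN].
  exists N; intros n hn. specialize (HN n hn).
  assert (Hqn : 0 <= q^n) by (apply pow_le; unfold q; lra).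
  rewrite Rabs_pos_eq in HN by exact Hqn.
  unfold R_dist. destruct (Hb n) as [[H1 H2] H3].
  assert (H4 : q^n * (1 - x0) <= q^n) by (rewrite <- (Rmult_1_r (q^n)) at 2; apply Rmult_le_compat_l; lra).
  rewrite Rabs_minus_sym, Rabs_pos_eq by lra. nra.
Qed.

Lemma part1 a c : a <> 1/2 -> c <> 1/2 ->
  (forall x, 0 <= x <= 1 ->
     (f_ac a c x = x <-> ((1/3 < x < 2/3) \/ x = 0 \/ x = 1))).
Proof.
  intros ha hc x hx.
  destruct (Rle_dec x (1/3)) as [H1|H1].
  - rewrite fL by exact H1. split.
    + intro Heq.
      assert (E : (1-2*a)*(x*(x-1)) = 0).
      { replace ((1-2*a)*(x*(x-1))) with (((1 - 2*a) * x^2 + 2*a*x) - x) by ring. lra. }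
      apply Rmult_integral in E; destruct E as [E|E]; [lra|].
      apply Rmult_integral in E; destruct E as [E|E]; lra.
    + intros [H|[H|H]]; [lra| subst; ring | lra].
  - destruct (Rlt_dec x (2/3)) as [H2|H2].
    + rewrite fM by lra. split; intros; [left; lra | reflexivity].
    + rewrite fR by lra. split.
      * intro Heq.
        assert (E : (1-2*c)*(x*(x-1)) = 0).
        { replace ((1-2*c)*(x*(x-1))) with (((1 - 2*c) * x^2 + 2*c*x) - x) by ring. lra. }
        apply Rmult_integral in E; destruct E as [E|E]; [lra|].
        apply Rmult_integral in E; destruct E as [E|E]; lra.
      * intros [H|[H|H]]; [lra| lra | subst; ring].
Qed.

Theorem theorem2p6 (a c : R) :
  0 <= a <= 1 -> 0 <= c <= 1 -> a <> 1/2 -> c <> 1/2 ->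
  (* 1. fixed points *)
  (forall x, 0 <= x <= 1 ->
     (f_ac a c x = x <-> ((1/3 < x < 2/3) \/ x = 0 \/ x = 1))) /\
  (* 2. *)
  (0 <= a < 1/2 -> 0 <= c < 1/2 ->
     forall x0, 2/3 <= x0 < 1 ->
       exists (n : nat) (p : R), 4/9 * (1 + c) <= p < 2/3 /\
         f_iter a c n x0 = p /\ f_iter a c (S n) x0 = f_ac a c p /\ f_ac a c p = p) /\
  (* 3. *)
  (0 <= a < 1/2 ->
     forall x0, 0 <= x0 <= 1/3 -> Un_cv (fun n => f_iter a c n x0) 0) /\
  (* 4. *)
  (1/2 < c <= 1 ->
     forall x0, 2/3 <= x0 <= 1 -> Un_cv (fun n => f_iter a c n x0) 1) /\
  (* 5. *)
  (1/2 < a <= 1 -> 0 <= c < 1/2 ->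
     (forall x0, 0 < x0 <= 1/3 ->
       exists (n : nat) (p : R), 1/3 < p <= 1/9 * (4*a + 1) /\
         f_iter a c n x0 = p /\ f_iter a c (S n) x0 = f_ac a c p /\ f_ac a c p = p) /\
     (forall x0, 2/3 <= x0 < 1 ->
       exists (n : nat) (p : R), 4/9 * (1 + c) <= p < 2/3 /\
         f_iter a c n x0 = p /\ f_iter a c (S n) x0 = f_ac a c p /\ f_ac a c p = p)) /\
  (* 6. *)
  (1/2 < a <= 1 -> 1/2 < c <= 1 ->
     forall x0, 0 < x0 <= 1/3 ->
       exists (n : nat) (p : R), 1/3 < p <= 1/9 * (4*a + 1) /\
         f_iter a c n x0 = p /\ f_iter a c (S n) x0 = f_ac a c p /\ f_ac a c p = p).
Proof.
  intros ha hc ha2 hc2.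
  split; [apply part1; auto|].
  split; [intros _ H; apply part2; exact H|].
  split; [apply part3|].
  split; [apply part4|].
  split; [intros H1 H2; split; [apply part5a; exact H1 | apply part2; exact H2]|].
  intros H1 _; apply part5a; exact H1.
Qed.
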